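(* Let $(\mathcal S,\mathcal A,P,r)$ be a finite MDP such that $\mathcal P^\pi g^\star=g^\star$ for every policy $\pi$, and let $(g^\star,h^\star)$ be a solution of the modified Bellman equations. Let $V^0\in\mathbb R^n$, $V^k=\tfrac12V^{k-1}+\tfrac12TV^{k-1}$ for $k\ge1$, and let $\pi_k$ be greedy policies, $T^{\pi_k}V^k=TV^k$. Then for every $k\ge1$, \[\|g^\star-g^{\pi_k}\|_\infty\le\|TV^k-V^k-g^\star\|_\infty\le\frac{4\|V^0-h^\star\|_\infty}{\sqrt{\varpi k}},\] where $\varpi=3.141592\ldots$ is the circle constant.
   Context: An MDP $(\mathcal S,\mathcal A,P,r)$ has finite state space $\mathcal S$ ($|\mathcal S|=n$, functions identified with $\mathbb R^n$), finite action space, transition probabilities $P(s'\mid s,a)$ and bounded reward $r$. For a policy $\pi$: $r^\pi(s)=\sum_a\pi(a\mid s)r(s,a)$, $\mathcal P^\pi(s,s')=\sum_a\pi(a\mid s)P(s'\mid s,a)$, $g^\pi(s)=\liminf_{T\to\infty}\frac1T\mathbb E_\pi[\sum_{t=0}^{T-1}r(s_t,a_t)\mid s_0=s]$, $g^\star=\max_\pi g^\pi$. $T^\pi V=r^\pi+\mathcal P^\pi V$, $(TV)(s)=\max_a\{r(s,a)+\sum_{s'}P(s'\mid s,a)V(s')\}$. A pair $(g,h)$ solves the modified Bellman equations if $\max_a\sum_{s'}P(s'\mid s,a)g(s')=g(s)$ and $\max_a\{r(s,a)+\sum_{s'}P(s'\mid s,a)h(s')\}=h(s)+g(s)$ for all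 $s$, with some policy attaining both maxima simultaneously; the first component of any solution equals $g^\star$. *)

(* Defs.v *)
From HB Require Import structures.
From mathcomp Require Import all_boot all_order all_algebra.
From mathcomp Require Import all_classical all_reals all_analysis.
Set Implicit Arguments. Unset Strict Implicit. Unset Printing Implicit Defensive.
Import Order.TTheory GRing.Theory Num.Theory.
Local Open Scope classical_set_scope.
Local Open Scope ring_scope.

Section MDP.
Variables (R : realType) (S A : finType).
Variables (P : S -> A -> S -> R) (r : S -> A -> R).

Definition is_kernel : Prop :=
  (forall s a s', 0 <= P s a s') /\ (forall s a, \sum_(s' : S) P s a s' = 1).

Definition is_policy (pi : S -> A -> R) : Prop :=
  (forall s a, 0 <= pi s a) /\ (forall s, \sum_(a : A) pi s a = 1).

Definition rpi (pi : S -> A -> R) (s : S) : R := \sum_(a : A) pi s a * r s a.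

Definition Ppi (pi : S -> A -> R) (V : S -> R) (s : S) : R :=
  \sum_(a : A) pi s a * \sum_(s' : S) P s a s' * V s'.

Definition Tpi (pi : S -> A -> R) (V : S -> R) (s : S) : R :=
  rpi pi s + Ppi pi V s.

(* maximum over the (finite, nonempty) action set *)
Definition maxA (F : A -> R) : R := sup (range F).

Definition Tbell (V : S -> R) (s : S) : R :=
  maxA (fun a => r s a + \sum_(s' : S) P s a s' * V s').

(* average gain: g^pi(s) = liminf_T (1/T) E_pi[sum_{t<T} r(s_t,a_t) | s_0 = s]
   = liminf_T (1/T) sum_{t<T} ((P^pi)^t r^pi)(s); indexed by T = n+1 *)
Definition gain (pi : S -> A -> R) (s : S) : R :=
  limn_inf (fun n : nat =>
    (n.+1%:R)^-1 * \sum_(t < n.+1) iter t (Ppi pi) (rpi pi) s).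

Definition gstar (s : S) : R := sup [set gain pi s | pi in is_policy].

Definition modified_bellman (g h : S -> R) : Prop :=
  (forall s, maxA (fun a => \sum_(s' : S) P s a s' * g s') = g s) /\
  (forall s, Tbell h s = h s + g s) /\
  (exists pi, is_policy pi /\ (forall s, Ppi pi g s = g s) /\
                              (forall s, Tpi pi h s = h s + g s)).

Fixpoint Viter (V0 : S -> R) (k : nat) : S -> R :=
  match k with
  | O => V0
  | k'.+1 => fun s => 2^-1 * Viter V0 k' s + 2^-1 * Tbell (Viter V0 k') s
  end.

End MDP.

Definition supnorm (R : realType) (S : finType) (v : S -> R) : R :=
  \big[Num.max/0]_(s : S) `|v s|.

(* Main.v *)
Require Import Defs.
From HB Require Import structures.
From mathcomp Require Import all_boot all_order all_algebra.
From mathcomp Require Import all_classical all_reals all_analysis.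
From mathcomp Require Import ring lra zify.
Import Order.TTheory GRing.Theory Num.Theory.
Import numFieldNormedType.Exports.
Local Open Scope ring_scope.


Section Wallis.
Context {R : realType}.
Notation mu := (@lebesgue_measure R).

Definition WI (k : nat) : R := \int[mu]_(x in `[0, pi]) (sin x ^+ k).

Lemma cont_sinX k : continuous (fun x : R => sin x ^+ k).
Proof.
elim: k => [|k IH].
  have -> : (fun x : R => sin x ^+ 0) = cst 1 by apply/funext => y; rewrite expr0.
  exact: cst_continuous.
have -> : (fun x : R => sin x ^+ k.+1) = sin \* (fun x => sin x ^+ k).
  by apply/funext => y; rewrite exprS.
move=> x; apply: continuousM; [exact: continuous_sin| exact: IH].
Qed.

Lemma int_sinX k : mu.-integrable `[0, pi] (EFin \o (fun x : R => sin x ^+ k)).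
Proof.
apply: continuous_compact_integrable; first exact: segment_compact.
exact/continuous_subspaceT/cont_sinX.
Qed.

Lemma intc (f : R -> R) : continuous f -> mu.-integrable `[0, pi] (EFin \o f).
Proof.
move=> cf; apply: continuous_compact_integrable; first exact: segment_compact.
exact/continuous_subspaceT.
Qed.

Lemma WI_rec k : k.+2%:R * WI k.+2 = k.+1%:R * WI k.
Proof.
have cA : continuous (fun x : R => k.+1%:R * (sin x ^+ k - sin x ^+ k.+2)).
  move=> x; apply: cvgM; first exact: cvg_cst.
  by apply: cvgB; exact: cont_sinX.
have e1 : WI k.+2 = \int[mu]_(x in `[0, pi]) (k.+1%:R * (sin x ^+ k - sin x ^+ k.+2)).
  rewrite /WI.
  have -> : \int[mu]_(x in `[0, pi]) (sin x ^+ k.+2) =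
     \int[mu]_(x in `[0, pi]) (sin x ^+ k.+1 * sin x).
    by apply: eq_Rintegral => x _; rewrite exprSr.
  rewrite (@Rintegration_by_parts R (fun x => sin x ^+ k.+1) (fun x => - cos x)
     (fun x => k.+1%:R * sin x ^+ k * cos x) sin 0 pi); last first.
  - move=> x _; rewrite derive1E deriveN// derive_val opprK //.
  - split.
    + by move=> x _; apply: derivableN.
    + by apply: cvgN; apply: cvg_at_right_filter; exact: continuous_cos.
    + by apply: cvgN; apply: cvg_at_left_filter; exact: continuous_cos.
  - exact/continuous_subspaceT/continuous_sin.
  - move=> x _; rewrite derive1E.
    have := is_deriveX k.+1 (is_derive_sin x).
    rewrite exprfctE => H; rewrite (@derive_val _ _ _ _ _ _ _ H) /= mulrC.
    by [].
  - split.
    + move=> x _.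
      have := is_deriveX k.+1 (is_derive_sin x).
      by rewrite exprfctE => H; apply: (@ex_derive _ _ _ _ _ _ _ H).
    + by apply: cvg_at_right_filter; exact: cont_sinX.
    + by apply: cvg_at_left_filter; exact: cont_sinX.
  - apply/continuous_subspaceT => x.
    apply: cvgM; last exact: continuous_cos.
    apply: cvgM; [exact: cvg_cst|exact: cont_sinX].
  - exact: pi_gt0.
  rewrite sin0 sinpi !expr0n /= !mul0r subrr sub0r.
  have -> : \int[mu]_(x in `[0, pi]) (k.+1%:R * sin x ^+ k * cos x * - cos x) =
     \int[mu]_(x in `[0, pi]) ((-1) * (k.+1%:R * (sin x ^+ k - sin x ^+ k.+2))).
    apply: eq_Rintegral => x _.
    have h2 : cos x * cos x = 1 - sin x ^+ 2 by rewrite -expr2 cos2sin2.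
    have h3 : sin x ^+ k.+2 = sin x ^+ k * sin x ^+ 2 by rewrite -exprD addn2.
    have h4 : sin x ^+ 2 = 1 - cos x * cos x by rewrite h2; ring.
    rewrite h3 h4; ring.
  by rewrite RintegralZl ?mulN1r ?opprK //; exact: intc.
have e2 : \int[mu]_(x in `[0, pi]) (k.+1%:R * (sin x ^+ k - sin x ^+ k.+2)) =
   k.+1%:R * (WI k - WI k.+2).
  rewrite RintegralZl //; last by apply: intc => x; apply: cvgB; exact: cont_sinX.
  by rewrite RintegralB //; exact: int_sinX.
rewrite e2 in e1.
move: e1; rewrite -[k.+2]addn1 natrD mulrDl mul1r mulrBr => e1.
by rewrite {2}e1; ring.
Qed.

Lemma WI0 : WI 0 = pi.
Proof.
rewrite /WI (eq_Rintegral _ (g := fun => 1)); last by move=> x _; rewrite expr0.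
rewrite Rintegral_cst//= lebesgue_measure_itv/= lte_fin pi_gt0/=.
by rewrite subr0 mul1r.
Qed.

Lemma WI1 : WI 1 = 2.
Proof.
have -> : WI 1 = \int[mu]_(x in `[0, pi]) sin x.
  by apply: eq_Rintegral => x _; rewrite expr1.
rewrite /Rintegral (@continuous_FTC2 _ _ (- cos)) ?pi_gt0//.
- change (- cos pi - - cos 0 = 2 :> R).
  rewrite cospi cos0 opprK; lra.
- exact/continuous_subspaceT/continuous_sin.
- split.
  + by move=> x x0pi; exact/derivableN/derivable_cos.
  + by apply: cvgN; apply: cvg_at_right_filter; exact: continuous_cos.
  + by apply: cvgN; apply: cvg_at_left_filter; exact: continuous_cos.
  + by move=> x x0pi; rewrite derive1E deriveN// derive_val opprK.
Qed.

Lemma WI_ge0 k : 0 <= WI k.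
Proof.
apply: Rintegral_ge0 => x /= /[!in_itv] /= /andP[x0 xpi].
by rewrite exprn_ge0// sin_ge0_pi// x0 xpi.
Qed.

Lemma WI_decr k : WI k.+1 <= WI k.
Proof.
apply: le_Rintegral => //; try exact: int_sinX.
move=> x /= /[!in_itv] /= /andP[x0 xpi].
have s0 : 0 <= sin x by rewrite sin_ge0_pi// x0 xpi.
rewrite exprS -[leRHS]mul1r ler_wpM2r// ?exprn_ge0// sin_le1.
Qed.

Lemma WI_prod k : k.+1%:R * WI k.+1 * WI k = 2 * pi.
Proof.
elim: k => [|k IH]; first by rewrite WI0 WI1 mul1r.
by rewrite WI_rec -IH; ring.
Qed.

Definition cc (n : nat) : R := ('C(n + n.+1, n))%:R / 2 ^+ (n + n.+1).

Lemma bin_id n : ('C(n.+1 + n.+2, n.+1) * n.+2 = 2 * (n.*2.+3) * 'C(n + n.+1, n))%N.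
Proof.
have e1 : (n.+1 + n.+2 = n.*2.+3)%N by rewrite -addnn; lia.
have e2 : (n + n.+1 = n.*2.+1)%N by rewrite -addnn; lia.
rewrite e1 e2.
have h1 := mul_bin_diag n.*2.+3 n.+1.
have h2 : 'C(n.*2.+3, n.+2) = 'C(n.*2.+3, n.+1).
  rewrite -[in RHS](@bin_sub n.*2.+3 n.+1); last by rewrite -addnn; lia.
  by congr 'C(_, _); rewrite -addnn; lia.
have h3 : 'C(n.*2.+2, n.+1) = 2 * 'C(n.*2.+1, n).
  rewrite binS.
  have : 'C(n.*2.+1, n.+1) = 'C(n.*2.+1, n).
    rewrite -[in RHS](@bin_sub n.*2.+1 n); last by rewrite -addnn; lia.
    by congr 'C(_, _); rewrite -addnn; lia.
  by move=> ->; lia.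
rewrite /= in h1; rewrite h2 in h1.
rewrite mulnC -h1 h3; lia.
Qed.

Lemma cc_rec n : cc n.+1 * (n.*2.+4)%:R = cc n * (n.*2.+3)%:R.
Proof.
rewrite /cc.
have e : (n.+1 + n.+2 = (n + n.+1) + 2)%N by lia.
rewrite e exprD.
have -> : (n.*2.+4 = 2 * n.+2)%N by rewrite -addnn; lia.
rewrite natrM.
have hb := bin_id n; rewrite e in hb.
have hb' : ('C(n + n.+1 + 2, n.+1))%:R * (n.+2)%:R = 2 * (n.*2.+3)%:R * ('C(n + n.+1, n))%:R :> R.
  by rewrite -!natrM hb.
have p0 : (2 : R) ^+ (n + n.+1) != 0 by rewrite expf_neq0.
move: hb' p0.
set C1 := ('C(n + n.+1 + 2, n.+1))%:R.
set C0 := ('C(n + n.+1, n))%:R.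
set P := (2 : R) ^+ (n + n.+1).
move=> hb' p0.
have -> : C1 / (P * 2 ^+ 2) * (2%:R * (n.+2)%:R) = (C1 * (n.+2)%:R) / (P * 2).
  by field.
by rewrite hb'; field.
Qed.

Lemma WI_cc n : WI (n.*2.+2) = pi * cc n.
Proof.
elim: n => [|n IH].
  have := WI_rec 0; rewrite WI0 /cc /= => h.
  rewrite addn1 bin0 expr1.
  apply: (@mulfI _ 2); first by rewrite pnatr_eq0.
  by rewrite h mul1r; field.
have h := WI_rec (n.*2.+2).
have -> : (n.+1).*2.+2 = (n.*2.+2).+2 by rewrite doubleS.
apply: (@mulfI _ (n.*2.+4)%:R); first by rewrite pnatr_eq0.
have := cc_rec n => hc.
by rewrite h IH mulrCA [RHS]mulrCA [_ * cc n]mulrC [_ * cc n.+1]mulrC hc.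
Qed.

Lemma cc_bound n : cc n ^+ 2 * (pi * n.+1%:R) <= 1.
Proof.
have hp := WI_prod (n.*2.+1).
have hd := WI_decr (n.*2.+1).
have h0 := WI_ge0 (n.*2.+2).
have hw := WI_cc n.
have e2 : (n.*2.+2)%:R = 2 * n.+1%:R :> R by rewrite -addnn -natrM; congr _%:R; lia.
rewrite e2 hw in hp; rewrite hw in hd h0.
have pi0 : (0:R) < pi := pi_gt0 _.
have : (pi * cc n) * (pi * cc n) <= pi * cc n * WI n.*2.+1 by rewrite ler_wpM2l.
move=> H.
have H2 : n.+1%:R * (pi * cc n * WI n.*2.+1) = pi by apply: (@mulfI _ 2) => //; rewrite -hp; ring.
have n0 : 0 < n.+1%:R :> R by rewrite ltr0n.
have : n.+1%:R * ((pi * cc n) * (pi * cc n)) <= pi.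
  by rewrite -[leRHS]H2 ler_wpM2l// ltW.
move=> H3.
rewrite -(@ler_pM2l _ pi)// mulr1; apply: le_trans H3.
rewrite le_eqVlt; apply/orP; left; apply/eqP; ring.
Qed.
End Wallis.


Section Binom.
Context {R : realType}.

Definition FB (N b : nat) : R := \sum_(k < b) ('C(N, k))%:R.

Lemma FB0 N : FB N 0 = 0.
Proof. by rewrite /FB big_ord0. Qed.

Lemma FBS N b : FB N b.+1 = FB N b + ('C(N, b))%:R.
Proof. by rewrite /FB big_ord_recr. Qed.

Lemma FB_pascal N b : FB N.+1 b.+1 = FB N b.+1 + FB N b.
Proof.
elim: b => [|b IH]; first by rewrite !FBS !FB0 !bin0; ring.
rewrite FBS IH FBS [FB N b.+2]FBS [FB N b.+1]FBS binS natrD; ring.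
Qed.

Lemma FB_full N : FB N N.+1 = 2 ^+ N.
Proof.
elim: N => [|N IH]; first by rewrite FBS FB0 bin0 expr0 add0r.
rewrite FB_pascal FBS IH bin_small // addr0 exprS; ring.
Qed.

Definition QB (m n : nat) : R := (FB (m + n) n - FB (m + n) m) / 2 ^+ (m + n).
Definition EB (m j : nat) : R := (FB (m + j) j.+2 - FB (m + j) m) / 2 ^+ (m + j).

Lemma QBmm m : QB m m = 0.
Proof. by rewrite /QB subrr mul0r. Qed.

Lemma EB0 j : EB 0 j = 1.
Proof.
by rewrite /EB add0n FB0 subr0 FBS FB_full bin_small // addr0 mulfV // expf_neq0.
Qed.

Lemma QB_key m n N : (m <= n)%N -> N = (m + n)%N ->
  FB N.+1 n.+1 - FB N.+1 m = (FB N n - FB N m) + (FB N n.+2 - FB N m).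
Proof.
case: m => [|a] mn eN.
  rewrite !FB0 FB_pascal [FB _ n.+2]FBS (@bin_small N n.+1); last by lia.
  by rewrite addr0; ring.
rewrite !FB_pascal [FB _ n.+2]FBS [FB _ n.+1]FBS [FB N a.+1]FBS.
have -> : 'C(N, n.+1) = 'C(N, a).
  rewrite -(@bin_sub N a); last by lia.
  by congr 'C(_, _); lia.
ring.
Qed.

Lemma QB_rec m n : (m <= n)%N -> QB m n.+1 = 2^-1 * QB m n + 2^-1 * EB m n.
Proof.
move=> mn; rewrite /QB /EB addnS exprS (@QB_key m n (m + n)%N mn erefl).
have p0 : (2 : R) ^+ (m + n) != 0 by rewrite expf_neq0.
by field.
Qed.

Lemma EB_key m j N : (m < j)%N -> N = (m + j)%N ->
  FB N.+1 j.+2 - FB N.+1 m.+1 = (FB N j.+2 - FB N m) + (FB N j - FB N m).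
Proof.
move=> mj eN.
rewrite !FB_pascal [FB N j.+1]FBS [FB N m.+1]FBS.
have -> : 'C(N, j) = 'C(N, m).
  rewrite -(@bin_sub N m); last by lia.
  by congr 'C(_, _); lia.
ring.
Qed.

Lemma EB_rec m j : (m < j)%N -> EB m.+1 j = 2^-1 * EB m j + 2^-1 * QB m j.
Proof.
move=> mj; rewrite /QB /EB addSn exprS (@EB_key m j (m + j)%N mj erefl).
have p0 : (2 : R) ^+ (m + j) != 0 by rewrite expf_neq0.
by field.
Qed.

Lemma QB_cc n : QB n n.+1 = cc n.
Proof. by rewrite /QB /cc FBS addrC addKr. Qed.

End Binom.

Section KM.
Context {R : realType} {S : Type}.
Variable T : (S -> R) -> (S -> R).
Definition close (u v : S -> R) (c : R) := forall s, `|u s - v s| <= c.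
Hypothesis T_ne : forall u v c, close u v c -> close (T u) (T v) c.
Variable h : S -> R.
Hypothesis T_fix : T h = h.
Variable x : nat -> S -> R.
Hypothesis hx : forall k s, x k.+1 s = 2^-1 * x k s + 2^-1 * T (x k) s.
Variable R0 : R.
Hypothesis hR0 : close (x 0) h R0.

Lemma close_avg {a b a' b' c1 c2} : close a a' c1 -> close b b' c2 ->
  close (fun s => 2^-1 * a s + 2^-1 * b s) (fun s => 2^-1 * a' s + 2^-1 * b' s)
    (2^-1 * c1 + 2^-1 * c2).
Proof.
move=> h1 h2 s.
have -> : 2^-1 * a s + 2^-1 * b s - (2^-1 * a' s + 2^-1 * b' s) =
   2^-1 * (a s - a' s) + 2^-1 * (b s - b' s) by ring.
apply: le_trans (ler_normD _ _) _.
rewrite !normrM ger0_norm ?invr_ge0 ?ler0n//.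
by apply: lerD; apply: ler_wpM2l; rewrite ?invr_ge0 ?ler0n.
Qed.

Lemma close_x_h k : close (x k) h R0.
Proof.
elim: k => [|k IH]; first exact: hR0.
move=> s; rewrite hx.
have := close_avg IH (T_ne _ _ _ IH) s; rewrite T_fix.
have -> : 2^-1 * h s + 2^-1 * h s = h s by field.
have -> : 2^-1 * R0 + 2^-1 * R0 = R0 by field.
by [].
Qed.

Lemma close_x0_Tx j : close (x 0) (T (x j)) (2 * R0).
Proof.
move=> s.
have h1 := hR0 s.
have h2 := T_ne _ _ _ (close_x_h j) s; rewrite T_fix in h2.
have -> : x 0 s - T (x j) s = (x 0 s - h s) + (h s - T (x j) s) by ring.
apply: le_trans (ler_normD _ _) _.
rewrite distrC in h2. lra.
Qed.

Lemma KM_main m :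
  (forall j, (m <= j)%N -> close (x m) (T (x j)) (2 * R0 * EB m j)) /\
  (forall n, (m <= n)%N -> close (x m) (x n) (2 * R0 * QB m n)).
Proof.
have Qpart : forall m, (forall j, (m <= j)%N -> close (x m) (T (x j)) (2 * R0 * EB m j)) ->
  (forall n, (m <= n)%N -> close (x m) (x n) (2 * R0 * QB m n)).
  move=> m0 HE n mn.
  rewrite -(subnKC mn).
  elim: (n - m0)%N => [|i IH].
    by move=> s; rewrite addn0 QBmm mulr0 subrr normr0.
  move=> s; rewrite addnS hx QB_rec; last by rewrite leq_addr.
  have := close_avg IH (HE _ (leq_addr i m0)) s.
  have -> : 2^-1 * x m0 s + 2^-1 * x m0 s = x m0 s by field.
  have -> : 2^-1 * (2 * R0 * QB m0 (m0 + i)) + 2^-1 * (2 * R0 * EB m0 (m0 + i)) =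
     2 * R0 * (2^-1 * QB m0 (m0 + i) + 2^-1 * EB m0 (m0 + i)) by ring.
  by [].
elim: m => [|m [IHE IHQ]].
  split; last by apply: Qpart => j _; rewrite EB0 mulr1; exact: close_x0_Tx.
  by move=> j _; rewrite EB0 mulr1; exact: close_x0_Tx.
have HE : forall j, (m.+1 <= j)%N -> close (x m.+1) (T (x j)) (2 * R0 * EB m.+1 j).
  move=> j mj s; rewrite hx EB_rec //.
  have mj' : (m <= j)%N by apply: ltnW.
  have := close_avg (IHE j mj') (T_ne _ _ _ (IHQ j mj')) s.
  have -> : 2^-1 * T (x j) s + 2^-1 * T (x j) s = T (x j) s by field.
  have -> : 2^-1 * (2 * R0 * EB m j) + 2^-1 * (2 * R0 * QB m j) =
     2 * R0 * (2^-1 * EB m j + 2^-1 * QB m j) by ring.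
  by [].
by split => //; exact: Qpart.
Qed.

Lemma KM_residual k : close (T (x k)) (x k) (4 * R0 * cc k).
Proof.
move=> s.
have := (KM_main k).2 k.+1 (leqnSn k) s.
rewrite QB_cc hx.
have -> : x k s - (2^-1 * x k s + 2^-1 * T (x k) s) = - (2^-1 * (T (x k) s - x k s)).
  lra.
rewrite normrN normrM ger0_norm ?invr_ge0 ?ler0n// => H.
have -> : 4 * R0 * cc k = 2 * (2 * R0 * cc k) by ring.
have -> : `|T (x k) s - x k s| = 2 * (2^-1 * `|T (x k) s - x k s|) by field.
by apply: ler_wpM2l.
Qed.

End KM.


Section MDPlemmas.
Variables (R : realType) (S A : finType) (P : S -> A -> S -> R) (r : S -> A -> R).
Hypothesis hA : (0 < #|A|)%N.
Hypothesis hP : is_kernel P.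

Definition closeM (u v : S -> R) (c : R) := forall s, `|u s - v s| <= c.

Lemma maxA_ub (F : A -> R) a : F a <= Defs.maxA F.
Proof.
rewrite /Defs.maxA; apply: ub_le_sup; last by exists a.
exists (\big[Num.max/F a]_(b : A) F b) => y [b _ <-].
exact: le_bigmax.
Qed.

Lemma maxA_le (F : A -> R) c : (forall a, F a <= c) -> Defs.maxA F <= c.
Proof.
move=> Fc; case/card_gt0P: hA => a0 _.
apply: ge_sup; first by exists (F a0); exists a0.
by move=> y [b _ <-].
Qed.

Lemma sumP_cst s a (V : S -> R) c :
  \sum_(s' : S) P s a s' * (V s' + c) = \sum_(s' : S) P s a s' * V s' + c.
Proof.
under eq_bigr do rewrite mulrDr.
by rewrite big_split /= -mulr_suml hP.2 mul1r.
Qed.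

Lemma sumP_le s a (U V : S -> R) c : (forall s', U s' <= V s' + c) ->
  \sum_(s' : S) P s a s' * U s' <= \sum_(s' : S) P s a s' * V s' + c.
Proof.
move=> UV; rewrite -sumP_cst; apply: ler_sum => s' _.
by apply: ler_wpM2l; [exact: hP.1|exact: UV].
Qed.

Lemma Tbell_le U V c s : (forall s', U s' <= V s' + c) ->
  Tbell P r U s <= Tbell P r V s + c.
Proof.
move=> UV; apply: maxA_le => a.
apply: le_trans (_ : r s a + (\sum_(s' : S) P s a s' * V s' + c) <= _).
  by rewrite lerD2l; exact: sumP_le.
rewrite addrA lerD2r.
exact: (maxA_ub (fun a => r s a + \sum_(s' : S) P s a s' * V s')).
Qed.

Lemma Tbell_close U V c : closeM U V c -> closeM (Tbell P r U) (Tbell P r V) c.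
Proof.
move=> UV s; rewrite ler_distl; apply/andP; split.
  rewrite lerBlDr; apply: Tbell_le => s'.
  by have := UV s'; rewrite ler_distl lerBlDr => /andP[].
apply: Tbell_le => s'.
by have := UV s'; rewrite ler_distl => /andP[].
Qed.

Lemma det_policy a : is_policy (fun (s : S) (b : A) => ((b == a)%:R : R)).
Proof.
split; first by move=> s b; rewrite ler0n.
move=> s; rewrite (bigD1 a) //= eqxx big1 ?addr0 // => b /negbTE ->.
by [].
Qed.

Lemma Ppi_det a V s :
  Ppi P (fun (s : S) (b : A) => ((b == a)%:R : R)) V s = \sum_(s' : S) P s a s' * V s'.
Proof.
rewrite /Ppi (bigD1 a) //= eqxx mul1r [X in _ + X]big1 ?addr0 // => b /negbTE ->.
by rewrite mul0r.
Qed.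

Lemma Tbell_shift (g : S -> R) (hg : forall s a, \sum_(s' : S) P s a s' * g s' = g s)
  V t s : Tbell P r (fun s => V s + t * g s) s = Tbell P r V s + t * g s.
Proof.
rewrite /Tbell.
have E a : r s a + \sum_(s' : S) P s a s' * (V s' + t * g s') =
    (r s a + \sum_(s' : S) P s a s' * V s') + t * g s.
  under eq_bigr do rewrite mulrDr.
  rewrite big_split /= addrA; congr (_ + _).
  under eq_bigr do rewrite mulrCA.
  by rewrite -mulr_sumr hg.
apply/eqP; rewrite eq_le; apply/andP; split.
  apply: maxA_le => a; rewrite E lerD2r.
  exact: (maxA_ub (fun a => r s a + \sum_(s' : S) P s a s' * V s')).
rewrite -lerBrDr; apply: maxA_le => a; rewrite lerBrDr -E.
exact: (maxA_ub (fun a => r s a + \sum_(s' : S) P s a s' * (V s' + t * g s'))).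
Qed.

Lemma Ppi_lin pi (al be : R) (u v : S -> R) s :
  Ppi P pi (fun s => al * u s + be * v s) s = al * Ppi P pi u s + be * Ppi P pi v s.
Proof.
rewrite /Ppi !mulr_sumr -big_split /=; apply: eq_bigr => a _.
rewrite !mulr_sumr -big_split /=; apply: eq_bigr => s' _.
ring.
Qed.

Lemma Ppi_close pi (hpi : is_policy pi) u c s : (forall s', `|u s'| <= c) ->
  `|Ppi P pi u s| <= c.
Proof.
move=> uc; rewrite /Ppi.
apply: le_trans (ler_norm_sum _ _ _) _.
apply: le_trans (_ : \sum_(a : A) pi s a * c <= _); last by rewrite -mulr_suml hpi.2 mul1r.
apply: ler_sum => a _; rewrite normrM ger0_norm; last exact: hpi.1.
apply: ler_wpM2l; first exact: hpi.1.
apply: le_trans (ler_norm_sum _ _ _) _.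
apply: le_trans (_ : \sum_(s' : S) P s a s' * c <= _); last by rewrite -mulr_suml hP.2 mul1r.
apply: ler_sum => s' _; rewrite normrM ger0_norm; last exact: hP.1.
by apply: ler_wpM2l; [exact: hP.1|exact: uc].
Qed.

End MDPlemmas.
Local Open Scope classical_set_scope.
Local Open Scope ring_scope.
Section Lim.
Context {R : realType}.

Lemma bounded_of (u : nat -> R) B : (forall n, `|u n| <= B) -> bounded_fun u.
Proof.
move=> hB; rewrite /= /bounded_near; near=> M => n _ /=.
apply: le_trans (hB n) _; near: M; apply: nbhs_pinfty_ge; exact: num_real.
Unshelve. all: by end_near.
Qed.

Lemma limn_inf_ge0 (u : nat -> R) : bounded_fun u -> (forall n, 0 <= u n) -> 0 <= limn_inf u.
Proof.
move=> bu u0; rewrite limn_infE//.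
apply: le_trans (_ : infs u 0 <= _).
  apply: lb_le_inf; first by exists (u 0%N); exists 0%N => //.
  by move=> y [n _ <-].
apply: ub_le_sup; last by exists 0%N.
exact: bounded_fun_has_ubound_infs.
Qed.

Lemma limn_inf_le (u v : nat -> R) : bounded_fun u -> bounded_fun v ->
  (forall n, u n <= v n) -> limn_inf u <= limn_inf v.
Proof.
move=> bu bv uv.
have bvu : bounded_fun (fun n => v n - u n).
  by have := bounded_funD bv (bounded_funN bu).
have := le_limn_infD bu bvu.
have -> : u \+ (fun n => v n - u n) = v by apply/funext => n /=; rewrite addrC subrK.
move=> H; apply: le_trans H; rewrite lerDl.
by apply: limn_inf_ge0 => // n; rewrite subr_ge0.
Qed.

Lemma cvg_lin (a b : R) : ((fun n : nat => a + b / n.+1%:R) @ \oo --> a)%classic.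
Proof.
have -> : (fun n : nat => a + b / n.+1%:R) = (fun n => a + b * harmonic n).
  by apply/funext => n; rewrite /harmonic /=.
rewrite -[X in _ --> X]addr0 -[X in _ --> _ + X](mulr0 b).
apply: cvgD; first exact: cvg_cst.
apply: cvgM; [exact: cvg_cst| exact: cvg_harmonic].
Qed.

Lemma limn_inf_between (u : nat -> R) (l c B : R) :
  (forall n, `|u n - l| <= c + B / n.+1%:R) ->
  l - c <= limn_inf u <= l + c.
Proof.
move=> hu.
have B0 : 0 <= c + B by have := hu 0%N; rewrite divr1; apply: le_trans.
have bu : bounded_fun u.
  apply: (@bounded_of _ (`|l| + (c + `|B|))) => n.
  have h := hu n.
  have : `|u n| <= `|l| + `|u n - l| by rewrite -{1}(subrK l (u n)) addrC; apply: ler_normD.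
  move=> h2; apply: le_trans h2 _; rewrite lerD2l; apply: le_trans h _.
  rewrite lerD2l; apply: le_trans (ler_norm _) _.
  rewrite normrM normfV normr_nat ler_pdivrMr ?ltr0n// ler_peMr// ler1n//.
have lo : forall n, l - (c + B / n.+1%:R) <= u n.
  by move=> n; have := hu n; rewrite ler_distl => /andP[].
have hi : forall n, u n <= l + (c + B / n.+1%:R).
  by move=> n; have := hu n; rewrite ler_distl => /andP[].
have cl : ((fun n : nat => l - (c + B / n.+1%:R)) @ \oo --> l - c)%classic.
  have -> : (fun n : nat => l - (c + B / n.+1%:R)) = (fun n : nat => (l - c) + (- B) / n.+1%:R).
    by apply/funext => n; rewrite mulNr; ring.
  exact: cvg_lin.
have ch : ((fun n : nat => l + (c + B / n.+1%:R)) @ \oo --> l + c)%classic.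
  have -> : (fun n : nat => l + (c + B / n.+1%:R)) = (fun n : nat => (l + c) + B / n.+1%:R).
    by apply/funext => n; ring.
  exact: cvg_lin.
apply/andP; split.
  rewrite -(cvg_limn_inf_sup cl).1.
  by apply: limn_inf_le => //; exact: cvg_seq_bounded (cvgP _ cl).
rewrite -(cvg_limn_inf_sup ch).1.
by apply: limn_inf_le => //; exact: cvg_seq_bounded (cvgP _ ch).
Qed.

End Lim.

Section Gain.
Variables (R : realType) (S A : finType) (P : S -> A -> S -> R) (r : S -> A -> R).
Hypothesis hP : is_kernel P.

Lemma iter_close pi (hpi : is_policy pi) t u c s : (forall s', `|u s'| <= c) ->
  `|iter t (Ppi P pi) u s| <= c.
Proof.
move=> uc; elim: t s => [|t IH] s /=; first exact: uc.
exact: Ppi_close.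
Qed.

Lemma Ppi_comb pi (a b g d : S -> R) s :
  Ppi P pi (fun s => a s - b s + g s + d s) s =
  Ppi P pi a s - Ppi P pi b s + Ppi P pi g s + Ppi P pi d s.
Proof.
have -> : (fun s => a s - b s + g s + d s) =
  (fun s => 1 * (fun s => 1 * (fun s => 1 * a s + (-1) * b s) s + 1 * g s) s + 1 * d s).
  by apply/funext => x /=; lra.
rewrite !Ppi_lin; ring.
Qed.

Lemma gain_close pi V (g d : S -> R) (hpi : is_policy pi)
  (hg : forall s, Ppi P pi g s = g s) c M :
  (forall s, rpi r pi s + Ppi P pi V s = V s + g s + d s) ->
  (forall s, `|d s| <= c) -> (forall s, `|V s| <= M) ->
  forall s, `|g s - gain P r pi s| <= c.
Proof.
move=> hV hd hM.
pose w t := iter t (Ppi P pi) (rpi r pi).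
have c1 : forall t s, w t s = iter t (Ppi P pi) V s - iter t.+1 (Ppi P pi) V s + g s
     + iter t (Ppi P pi) d s.
  elim=> [|t IH] s.
    by rewrite /w /=; move: (hV s); lra.
  have -> : w t.+1 s = Ppi P pi (w t) s by [].
  have -> : w t = (fun s => iter t (Ppi P pi) V s - iter t.+1 (Ppi P pi) V s + g s
     + iter t (Ppi P pi) d s) by apply/funext => x; exact: IH.
  by rewrite Ppi_comb hg.
have c2 : forall N s, \sum_(t < N) w t s =
   V s - iter N (Ppi P pi) V s + N%:R * g s + \sum_(t < N) iter t (Ppi P pi) d s.
  elim=> [|N IH] s.
    by rewrite !big_ord0 /= mul0r; ring.
  rewrite !big_ord_recr /= IH c1 /= -natr1; ring.
move=> s; rewrite /gain.
have hb : forall n, `|(n.+1%:R)^-1 * \sum_(t < n.+1) iter t (Ppi P pi) (rpi r pi) s - g s|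
    <= c + (2 * M) / n.+1%:R.
  move=> n.
  have n0 : (0 : R) < n.+1%:R by rewrite ltr0n.
  have -> : (n.+1%:R)^-1 * \sum_(t < n.+1) iter t (Ppi P pi) (rpi r pi) s - g s =
     (n.+1%:R)^-1 * ((V s - iter n.+1 (Ppi P pi) V s) + \sum_(t < n.+1) iter t (Ppi P pi) d s).
    rewrite (c2 n.+1 s); field; by rewrite lt0r_neq0.
  rewrite normrM ger0_norm ?invr_ge0 ?ler0n//.
  have h1 : `|V s - iter n.+1 (Ppi P pi) V s| <= 2 * M.
    apply: le_trans (ler_normB _ _) _.
    have := hM s; have := @iter_close pi hpi n.+1 V M s hM; lra.
  have h2 : `|\sum_(t < n.+1) iter t (Ppi P pi) d s| <= n.+1%:R * c.
    apply: le_trans (ler_norm_sum _ _ _) _.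
    apply: le_trans (_ : \sum_(t < n.+1) c <= _).
      by apply: ler_sum => t _; exact: iter_close.
    by rewrite sumr_const card_ord mulr_natl.
  have := ler_normD (V s - iter n.+1 (Ppi P pi) V s) (\sum_(t < n.+1) iter t (Ppi P pi) d s).
  move=> h3.
  rewrite -ler_pdivlMl ?invr_gt0 // invrK.
  apply: le_trans h3 _.
  have -> : n.+1%:R * (c + 2 * M / n.+1%:R) = n.+1%:R * c + 2 * M.
    by field; rewrite lt0r_neq0.
  lra.
have := @limn_inf_between _ _ _ _ _ hb.
set L := limn_inf _.
move=> /andP[h1 h2].
rewrite distrC ler_distl; apply/andP; split; lra.
Qed.

End Gain.

Section Supnorm.
Context {R : realType} {S : finType}.

Lemma supnorm_ge (v : S -> R) s : `|v s| <= supnorm v.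
Proof. rewrite /supnorm; exact: le_bigmax. Qed.

Lemma supnorm_ge0 (v : S -> R) : 0 <= supnorm v.
Proof.
rewrite /supnorm; elim/big_ind: _ => //.
by move=> x y x0 y0; rewrite le_max x0.
Qed.

Lemma supnorm_le (v : S -> R) c : 0 <= c -> (forall s, `|v s| <= c) -> supnorm v <= c.
Proof. by move=> c0 vc; rewrite /supnorm; apply: bigmax_le. Qed.

End Supnorm.

Lemma cc_ge0 {R : realType} n : (0 : R) <= cc n.
Proof. by rewrite /cc divr_ge0 // exprn_ge0. Qed.

Lemma cc_sqrt {R : realType} k : (1 <= k)%N -> (cc k : R) <= (Num.sqrt (pi * k%:R))^-1.
Proof.
move=> k1.
have pi0 : (0 : R) < pi := pi_gt0 _.
have pk : (0 : R) < pi * k%:R by rewrite mulr_gt0 // ltr0n.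
have h1 : (cc k : R) ^+ 2 * (pi * k%:R) <= 1.
  apply: (@le_trans _ _ (cc k ^+ 2 * (pi * k.+1%:R))); last exact: cc_bound.
  apply: ler_wpM2l; first exact: exprn_ge0 (cc_ge0 k).
  by apply: ler_wpM2l; [exact: ltW | rewrite ler_nat].
have sq0 : (0 : R) < Num.sqrt (pi * k%:R) by rewrite sqrtr_gt0.
rewrite -(@ler_pM2r _ (Num.sqrt (pi * k%:R))) // mulVf ?gt_eqF //.
have : Num.sqrt ((cc k : R) ^+ 2 * (pi * k%:R)) <= Num.sqrt 1 by rewrite ler_sqrt.
by rewrite sqrtr1 sqrtrM ?exprn_ge0 ?cc_ge0 // sqrtr_sqr ger0_norm ?cc_ge0.
Qed.

Theorem corollary1 (R : realType) (S A : finType)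
  (P : S -> A -> S -> R) (r : S -> A -> R)
  (hA : (0 < #|A|)%N)
  (hP : is_kernel P)
  (hgP : forall mu, is_policy mu -> forall s, Ppi P mu (gstar P r) s = gstar P r s)
  (h : S -> R) (hMB : modified_bellman P r (gstar P r) h)
  (V0 : S -> R) (pik : nat -> S -> A -> R)
  (hgreedy : forall k, is_policy (pik k) /\
     forall s, Tpi P r (pik k) (Viter P r V0 k) s = Tbell P r (Viter P r V0 k) s) :
  forall k : nat, (1 <= k)%N ->
    supnorm (fun s => gstar P r s - gain P r (pik k) s)
      <= supnorm (fun s => Tbell P r (Viter P r V0 k) s - Viter P r V0 k s - gstar P r s)
    /\ supnorm (fun s => Tbell P r (Viter P r V0 k) s - Viter P r V0 k s - gstar P r s)
      <= 4 * supnorm (fun s => V0 s - h s) / Num.sqrt (pi * k%:R).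
Proof.
move=> k k1.
set g := gstar P r.
have hg : forall s a, \sum_(s' : S) P s a s' * g s' = g s.
  by move=> s a; rewrite -(@Ppi_det R S A P a g s); exact: hgP (det_policy R S A a) s.
pose Tt := fun (V : S -> R) s => Tbell P r V s - g s.
have Tt_ne : forall u v c, close u v c -> close (Tt u) (Tt v) c.
  move=> u v c uv s; rewrite /Tt.
  have := @Tbell_close R S A P r hA hP _ _ _ uv s.
  by rewrite opprB addrA subrK.
have Tt_fix : Tt h = h.
  case: hMB => _ [hTh _].
  by apply/funext => s; rewrite /Tt hTh addrK.
pose x := fun (k : nat) s => Viter P r V0 k s - (k%:R / 2) * g s.
have hV : forall k, Viter P r V0 k = fun s => x k s + (k%:R / 2) * g s.
  by move=> k0; apply/funext => s; rewrite /x subrK.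
have hx : forall k s, x k.+1 s = 2^-1 * x k s + 2^-1 * Tt (x k) s.
  move=> k0 s.
  have e1 : x k0.+1 s = (2^-1 * Viter P r V0 k0 s + 2^-1 * Tbell P r (Viter P r V0 k0) s)
     - (k0.+1%:R / 2) * g s by [].
  rewrite e1 (hV k0) (@Tbell_shift R S A P r hA g hg) /Tt -natr1.
  by rewrite /=; field.
set R0 := supnorm (fun s => V0 s - h s).
have hR0 : close (x 0%N) h R0.
  move=> s0; rewrite /x /= !mul0r subr0.
  exact: (supnorm_ge (fun s => V0 s - h s)).
have res := @KM_residual R S Tt Tt_ne h Tt_fix x hx R0 hR0 k.
have resE : forall s, Tbell P r (Viter P r V0 k) s - Viter P r V0 k s - g s = Tt (x k) s - x k s.
  move=> s; rewrite (hV k) (@Tbell_shift R S A P r hA g hg) /Tt /=; ring.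
have R00 : 0 <= R0 by exact: supnorm_ge0.
split.
  case: (hgreedy k) => hpi hgr.
  apply: supnorm_le; first exact: supnorm_ge0.
  apply: (@gain_close R S A P r hP (pik k) (Viter P r V0 k) g (fun s => Tbell P r (Viter P r V0 k) s - Viter P r V0 k s - g s) hpi _ _ (supnorm (Viter P r V0 k))).
  - by move=> s; exact: hgP.
  - by move=> s; have := hgr s; rewrite /Tpi => ->; ring.
  - by move=> s; exact: (supnorm_ge (fun s => Tbell P r (Viter P r V0 k) s - Viter P r V0 k s - g s)).
  - by move=> s; exact: (supnorm_ge (Viter P r V0 k)).
apply: le_trans (_ : 4 * R0 * cc k <= _).
  apply: supnorm_le; first by rewrite mulr_ge0 ?cc_ge0 // mulr_ge0.
  by move=> s; rewrite resE; exact: res.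
by apply: ler_wpM2l; [rewrite mulr_ge0 | exact: cc_sqrt].
Qed.
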